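(* Let $n\ge4$ be even, let $f=\mathrm{Jump}_{n/2-1}$, and let $k\in\{1,\dots,n/2-1\}$. Consider the procedure $\mathrm{moveFirst}_k(x,y)$ defined as follows: repeat (outer loop) — sample $x'$ from $x$ by flipping one position chosen uniformly at random among the positions where $x$ and $y$ agree; then perform up to $\lfloor 2\log_2 n\rfloor+1$ tests, each sampling $u$ from $x'$ by flipping $k-1$ positions chosen uniformly at random (without repetition) among the positions where $x'$ and $y$ differ and querying $f(u)$; if some test gives $f(u)=n/2$, stop the tests and restart the outer loop; if no test gives $f(u)=n/2$, return $x'$. Then $\mathrm{moveFirst}_k$ uses only binary unbiased variation operators, and if $(x,y)$ is an opposing $k$-pair, the following hold. (i) Let $X$ be a geometric random variable with success probability $1/2$ (number of trials up to and including the first success) and let $T$ be the number of fitness evaluations of one run; then $T$ is stochastically dominated by $(1+2\log_2 n)X$, also when conditioning on the output satisfying $d(x')=k+1$. (ii) With probability at least $1-(2\log_2 n)/n^2$, the output $x'$ satisfies $d(x')=k+1$, $H(x,x')=1$, and $H(x',y)=2k+1$.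
   Context: For $x\in\{0,1\}^n$ let $|x|_1=\sum_ix_i$ and $H$ the Hamming distance. For $n$ even, $\mathrm{Jump}_{n/2-1}(x)=n$ if $|x|_1=n$, $=n/2$ if $|x|_1=n/2$, and $=0$ otherwise. Let $d(x)=\big||x|_1-n/2\big|$ and $\mathrm{sgn}(x)\in\{-1,0,+1\}$ the sign of $|x|_1-n/2$. A pair $(x,y)$ is an opposing $k$-pair if $\mathrm{sgn}(x)\,\mathrm{sgn}(y)=-1$, $d(x)=d(y)=k$, and $H(x,y)=2k$. A binary unbiased variation operator samples from a family $(D(\cdot\mid y^{(1)},y^{(2)}))$ of distributions on $\{0,1\}^n$ invariant under XOR-ing all arguments with a common $z$ and under applying a common permutation of positions to all arguments. *)

(* Defs.v *)
From Stdlib Require Import Reals ZArith.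
From mathcomp Require Import all_boot.

Delimit Scope R_scope with Re.
Set Implicit Arguments.
Unset Strict Implicit.
Unset Printing Implicit Defensive.

Definition bs (n : nat) := {ffun 'I_n -> bool}.

Definition ones n (x : bs n) : nat := #|[set i | x i]|.

Definition ham n (x y : bs n) : nat := #|[set i | x i != y i]|.

Definition jump n (x : bs n) : nat :=
  if ones x == n then n else if ones x == n./2 then n./2 else 0.

Definition dhalf n (x : bs n) : nat :=
  Z.abs_nat (Z.of_nat (ones x) - Z.of_nat (n./2)).

Definition sgnhalf n (x : bs n) : Z :=
  Z.sgn (Z.of_nat (ones x) - Z.of_nat (n./2)).

Definition opposing_pair n (k : nat) (x y : bs n) : Prop :=
  (sgnhalf x * sgnhalf y = -1)%Z /\ dhalf x = k /\ dhalf y = k /\ ham x y = 2 * k.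

Definition flip n (x : bs n) (i : 'I_n) : bs n :=
  [ffun j => if j == i then ~~ x j else x j].
Definition flipset n (x : bs n) (S : {set 'I_n}) : bs n :=
  [ffun j => if j \in S then ~~ x j else x j].

Definition agree n (x y : bs n) : {set 'I_n} := [set i | x i == y i].
Definition differ n (x y : bs n) : {set 'I_n} := [set i | x i != y i].

Definition indR (b : bool) : R := if b then 1%Re else 0%Re.

(* Binary unbiased variation operators: D a b z = probability of sampling z
   given the two arguments (a, b). *)
Definition bxor n (a w : bs n) : bs n := [ffun i => xorb (a i) (w i)].
Definition bperm n (s : 'I_n -> 'I_n) (a : bs n) : bs n := [ffun i => a (s i)].

Definition binary_unbiased n (D : bs n -> bs n -> bs n -> R) : Prop :=
  (forall w a b z, D (bxor a w) (bxor b w) (bxor z w) = D a b z) /\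
  (forall s : 'I_n -> 'I_n, bijective s ->
     forall a b z, D (bperm s a) (bperm s b) (bperm s z) = D a b z).

Definition K1 n (x y z : bs n) : R :=
  \big[Rplus/0%Re]_(i in agree x y)
     (/ INR #|agree x y| * indR (z == flip x i))%Re.

Definition ksets n (k : nat) (x y : bs n) : {set {set 'I_n}} :=
  [set S : {set 'I_n} | (S \subset differ x y) && (#|S| == k.-1)].
Definition K2 n (k : nat) (x y u : bs n) : R :=
  \big[Rplus/0%Re]_(S in ksets k x y)
     (/ INR #|ksets k x y| * indR (u == flipset x S))%Re.

Definition psucc n (k : nat) (x' y : bs n) : R :=
  \big[Rplus/0%Re]_(u : bs n) (K2 k x' y u * indR (jump u == n./2))%Re.

Definition log2 (r : R) : R := (ln r / ln 2)%Re.

Definition ntests (n : nat) : nat :=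
  (Z.to_nat (Int_part (2 * log2 (INR n))%Re)).+1.

(* One outer iteration, starting from x (fitness evaluations = tests):
   - returns z after exactly ntests n evaluations *)
Definition iter_ret n (k : nat) (x y z : bs n) (t : nat) : R :=
  (K1 x y z * (1 - psucc k z y) ^ ntests n * indR (t == ntests n))%Re.
(* - restarts after exactly j evaluations (the j-th test succeeded) *)
Definition iter_restart n (k : nat) (x y : bs n) (j : nat) : R :=
  if (1 <= j <= ntests n) then
    \big[Rplus/0%Re]_(x' : bs n)
       (K1 x y x' * (1 - psucc k x' y) ^ (j - 1) * psucc k x' y)%Re
  else 0%Re.

(* law_iter r z t = Pr[run performs exactly r restarts, outputs z, and uses
   exactly t fitness evaluations] *)
Fixpoint law_iter n (k : nat) (x y : bs n) (r : nat) (z : bs n) (t : nat) : R :=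
  match r with
  | 0 => iter_ret k x y z t
  | r'.+1 => \big[Rplus/0%Re]_(j < t.+1)
               (iter_restart k x y j * law_iter k x y r' z (t - j))%Re
  end.

(* Joint law of (output, T) of moveFirst_k(x, y): Pr[output = z /\ T = t].
   Each restart costs >= 1 evaluation, so at most t restarts are possible. *)
Definition law n (k : nat) (x y z : bs n) (t : nat) : R :=
  \big[Rplus/0%Re]_(r < t.+1) law_iter k x y r z t.

Definition Rleb (a b : R) : bool := if Rle_dec a b then true else false.

(* Pr[T <= s /\ E(output)] for real s (non-terminating runs have T = oo) *)
Definition probT_le n (k : nat) (x y : bs n) (E : pred (bs n)) (s : R) : R :=
  \big[Rplus/0%Re]_(t < (Z.to_nat (up s)).+1 | Rleb (INR t) s)
     \big[Rplus/0%Re]_(z | E z) law k x y z t.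

(* partial sums  Pr[T <= N /\ E(output)]; their limit is Pr[E(output)] *)
Definition probE_partial n (k : nat) (x y : bs n) (E : pred (bs n)) (N : nat) : R :=
  \big[Rplus/0%Re]_(t < N.+1) \big[Rplus/0%Re]_(z | E z) law k x y z t.

(* Pr[c X <= s] for X geometric with success probability 1/2 (support 1,2,..)
   and c >= 1 *)
Definition geom_le (c s : R) : R :=
  \big[Rplus/0%Re]_(i < (Z.to_nat (up s)).+1 | (0 < i)%N && Rleb (INR i * c) s)
     ((/ 2) ^ i)%Re.

(* Main.v *)
Require Import Defs.
From Stdlib Require Import Reals ZArith.
From mathcomp Require Import all_boot.
Delimit Scope R_scope with Re.
From HB Require Import structures.
From Stdlib Require Import Lia Lra.
From mathcomp Require Import zify.

Set Implicit Arguments.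
Unset Strict Implicit.
Unset Printing Implicit Defensive.

Lemma Rplus_assoc' : associative Rplus. Proof. by move=> a b c; rewrite Rplus_assoc. Qed.
HB.instance Definition _ := Monoid.isComLaw.Build R 0%Re Rplus Rplus_assoc' Rplus_comm Rplus_0_l.
HB.instance Definition _ := Monoid.isMulLaw.Build R 0%Re Rmult Rmult_0_l Rmult_0_r.
HB.instance Definition _ := Monoid.isAddLaw.Build R Rmult Rplus Rmult_plus_distr_r Rmult_plus_distr_l.

Local Open Scope R_scope.

Lemma sumR_ge0 (I : Type) (r : seq I) (P : pred I) (F : I -> R) :
  (forall i, P i -> 0 <= F i) -> 0 <= \big[Rplus/0]_(i <- r | P i) F i.
Proof. move=> H; apply: big_ind => //; [lra | move=> a b; lra]. Qed.

Lemma sumR_le (I : Type) (r : seq I) (P : pred I) (F G : I -> R) :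
  (forall i, P i -> F i <= G i) ->
  \big[Rplus/0]_(i <- r | P i) F i <= \big[Rplus/0]_(i <- r | P i) G i.
Proof. move=> H; apply: (big_ind2 Rle) => //; [lra | move=> a b c d; lra]. Qed.

Lemma sumR_sub (I : Type) (r : seq I) (P Q : pred I) (F : I -> R) :
  (forall i, P i -> Q i) -> (forall i, Q i -> 0 <= F i) ->
  \big[Rplus/0]_(i <- r | P i) F i <= \big[Rplus/0]_(i <- r | Q i) F i.
Proof.
move=> PQ F0; rewrite big_mkcond [X in _ <= X]big_mkcond; apply: sumR_le => i _.
case: ifP => Pi; first by rewrite PQ //; lra.
case: ifP => Qi; [exact: F0 | lra].
Qed.

Lemma iter_Rplus (c : R) k : iter k (Rplus c) 0 = INR k * c.
Proof. elim: k => [|k IH]; first by rewrite /=; lra. rewrite S_INR -/(iter k.+1 _ _) iterS IH; lra. Qed.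

Lemma sumR_const (I : finType) (A : {pred I}) (c : R) :
  \big[Rplus/0]_(i in A) c = INR #|A| * c.
Proof. by rewrite big_const iter_Rplus. Qed.

Lemma sumR_ind (T : finType) (w : T) (G : T -> R) :
  \big[Rplus/0]_(z : T) (indR (z == w) * G z) = G w.
Proof.
rewrite (bigD1 w) //= eqxx /indR big1 ?Rplus_0_r ?Rmult_1_l // => z /negbTE ->.
by rewrite Rmult_0_l.
Qed.

Lemma sum1 (F: nat->R): \big[Rplus/0]_(0 <= t < 1) F t = F 0%N.
Proof. by rewrite big_nat_recr //= big_geq // Rplus_0_l. Qed.

Lemma dc_sum (f g : nat -> R) (P : pred nat) M :
  (forall i j, (i <= j)%N -> P j -> P i) ->
  (forall j, \big[Rplus/0]_(i < j) f i <= \big[Rplus/0]_(i < j) g i) ->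
  \big[Rplus/0]_(i < M | P i) f i <= \big[Rplus/0]_(i < M | P i) g i.
Proof.
move=> Pdc H; elim: M => [|M IH]; first by rewrite !big_ord0; lra.
case PM: (P M).
- have E : forall F : nat -> R, \big[Rplus/0]_(i < M.+1 | P i) F i = \big[Rplus/0]_(i < M.+1) F i.
    move=> F; apply: eq_bigl => i; apply: (Pdc _ M) => //.
    by rewrite -ltnS.
  by rewrite !E.
- rewrite [X in X <= _]big_mkcond [X in _ <= X]big_mkcond !big_ord_recr /= PM !Rplus_0_r -!big_mkcond; exact: IH.
Qed.

Lemma geom_sum (a : R) j :
  (1 - a) * \big[Rplus/0]_(r < j) a ^ r = 1 - a ^ j.
Proof.
elim: j => [|j IH]; first by rewrite big_ord0 /=; ring.
rewrite big_ord_recr /= Rmult_plus_distr_l IH; ring.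
Qed.

Lemma half_sum j : \big[Rplus/0]_(r < j) (/2) ^ r.+1 = 1 - (/2) ^ j.
Proof.
elim: j => [|j IH]; first by rewrite big_ord0 /=; ring.
rewrite big_ord_recr /= IH; field.
Qed.

Lemma geom_div (a : R) j : a < 1 ->
  \big[Rplus/0]_(r < j) a ^ r = (1 - a ^ j) / (1 - a).
Proof.
move=> Ha; rewrite -(geom_sum a j); field; lra.
Qed.

Lemma RlebP a b : Rleb a b = true <-> a <= b.
Proof. by rewrite /Rleb; case: Rle_dec. Qed.

Lemma cmpgeom N (Pc Q : pred nat) (Rt bE : R) :
  (forall i j, (i <= j)%N -> Pc j -> Pc i) -> (forall r, Pc r -> Q r) ->
  0 <= Rt <= /2 -> 0 <= bE ->
  \big[Rplus/0]_(r < N | Pc r) ((/2) ^ r.+1 * (bE / (1 - Rt))) <=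
  bE * \big[Rplus/0]_(r < N | Q r) Rt ^ r.
Proof.
move=> Pdc PQ HR HbE.
apply: (Rle_trans _ (bE * \big[Rplus/0]_(r < N | Pc r) Rt ^ r)); last first.
  apply: Rmult_le_compat_l => //; apply: sumR_sub => [r /PQ //|r _ /=]; apply: pow_le; lra.
rewrite big_distrr /=.
apply: (@dc_sum (fun r : nat => (/2) ^ r.+1 * (bE / (1 - Rt))) (fun r : nat => bE * Rt ^ r)) => // j.
have E1 : \big[Rplus/0]_(i < j) ((/ 2) ^ i.+1 * (bE / (1 - Rt))) =
   (\big[Rplus/0]_(i < j) (/ 2) ^ i.+1) * (bE / (1 - Rt)) by rewrite big_distrl.
have E2 : \big[Rplus/0]_(i < j) (bE * Rt ^ i) = bE * \big[Rplus/0]_(i < j) Rt ^ i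
  by rewrite big_distrr.
rewrite E1 E2 half_sum geom_div; last lra.
have h1 : Rt ^ j <= (/2) ^ j by apply: pow_incr; lra.
have h2 : 0 < 1 - Rt by lra.
rewrite /Rdiv.
have h3 : 0 <= bE * / (1 - Rt) by apply: Rmult_le_pos => //; left; apply: Rinv_0_lt_compat.
have : (1 - (/2)^j) * (bE * / (1 - Rt)) <= (1 - Rt ^ j) * (bE * / (1 - Rt)).
  apply: Rmult_le_compat_r => //; lra.
lra.
Qed.

Section Gen.
Variables (Tz : finType) (rho : nat -> R) (beta : Tz -> R) (m : nat).
Hypotheses (m_gt0 : (0 < m)%N) (rho_ge0 : forall j, 0 <= rho j) (rho0 : rho 0%N = 0)
  (rho_big : forall j, (m < j)%N -> rho j = 0) (beta_ge0 : forall z, 0 <= beta z).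

Fixpoint L (r : nat) (z : Tz) (t : nat) : R :=
  match r with
  | 0 => beta z * indR (t == m)
  | r'.+1 => \big[Rplus/0]_(j < t.+1) (rho j * L r' z (t - j))
  end.

Definition Rt := \big[Rplus/0]_(0 <= j < m.+1) rho j.
Definition S r z N := \big[Rplus/0]_(0 <= t < N.+1) L r z t.

Lemma L_ge0 r z t : 0 <= L r z t.
Proof.
elim: r t => [|r IH] t /=.
  by apply: Rmult_le_pos => //; rewrite /indR; case: ifP => _; lra.
apply: sumR_ge0 => j _; exact: Rmult_le_pos.
Qed.

Lemma L_small r z t : (t < r)%N -> L r z t = 0.
Proof.
elim: r t => [|r IH] t //= Ht.
apply: big1 => j _.
have [->|jp] := eqVneq (nat_of_ord j) 0%N; first by rewrite rho0 Rmult_0_l.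
rewrite IH ?Rmult_0_r //.
have := ltn_ord j; move: jp Ht; lia.
Qed.

Lemma triangle (f : nat -> nat -> R) N :
  \big[Rplus/0]_(0 <= t < N.+1) \big[Rplus/0]_(0 <= j < t.+1) f j (t - j)%N =
  \big[Rplus/0]_(0 <= j < N.+1) \big[Rplus/0]_(0 <= t < (N - j).+1) f j t.
Proof.
elim: N => [|T IH].
  by rewrite !sum1.
rewrite big_nat_recr // IH /=.
rewrite [in RHS]big_nat_recr //= subnn sum1.
rewrite [X in _ = X + _](eq_big_nat _ _ (F2 := fun j => \big[Rplus/0]_(0 <= t < (T - j).+1) f j t + f j (T.+1 - j)%N)); last first.
  move=> j /andP [_ Hj]; rewrite subSn // big_nat_recr //=.
by rewrite [X in _ + X = _]big_nat_recr //= subnn big_split /= Rplus_assoc.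
Qed.

Lemma L_nat r z t :
  L r.+1 z t = \big[Rplus/0]_(0 <= j < t.+1) (rho j * L r z (t - j)).
Proof. by rewrite /= big_mkord. Qed.

Lemma S_rec r z N :
  S r.+1 z N = \big[Rplus/0]_(0 <= j < N.+1) (rho j * S r z (N - j)).
Proof.
rewrite /S.
under eq_bigr do rewrite L_nat.
rewrite (triangle (fun j t => rho j * L r z t)).
by apply: eq_bigr => j _; rewrite big_distrr.
Qed.

Lemma rsum_eq N : (m <= N)%N -> \big[Rplus/0]_(0 <= j < N.+1) rho j = Rt.
Proof.
elim: N => [|N IH]; first by move=> H; move: m_gt0; rewrite ltnNge H.
rewrite leq_eqVlt => /orP [/eqP <- //|H].
by rewrite big_nat_recr //= rho_big // Rplus_0_r IH.
Qed.

Lemma rsum_le N : \big[Rplus/0]_(0 <= j < N.+1) rho j <= Rt.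
Proof.
case: (leqP m N) => H; first by rewrite rsum_eq //; lra.
rewrite /Rt (@big_cat_nat _ _ _ N.+1 0 m.+1) //; last by rewrite ltnW.
have := @sumR_ge0 _ (index_iota N.+1 m.+1) xpredT rho (fun j _ => rho_ge0 j).
rewrite /=; lra.
Qed.

Lemma ind_sum N :
  \big[Rplus/0]_(0 <= t < N.+1) indR (t == m) = if (m <= N)%N then 1 else 0.
Proof.
elim: N => [|N IH].
  rewrite sum1 /indR; case: (m) m_gt0 => //.
rewrite big_nat_recr //= IH /indR.
case: (leqP m N) => H.
  have -> : (N.+1 == m) = false by apply/negbTE; move: H; lia.
  rewrite (leqW H); lra.
case: (eqVneq N.+1 m) => E.
  by rewrite E leqnn; lra.
have -> : (m <= N.+1)%N = false by move: H E; lia.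
lra.
Qed.

Lemma S0_le z N : S 0 z N <= beta z.
Proof.
rewrite /S /= -big_distrr /= ind_sum; case: ifP => _; have := beta_ge0 z; nra.
Qed.

Lemma S0_eq z N : (m <= N)%N -> S 0 z N = beta z.
Proof. by move=> H; rewrite /S /= -big_distrr /= ind_sum H Rmult_1_r. Qed.

Lemma Rt_ge0 : 0 <= Rt.
Proof. exact: sumR_ge0. Qed.

Lemma S_le r z N : S r z N <= beta z * Rt ^ r.
Proof.
elim: r N => [|r IH] N; first by rewrite /= Rmult_1_r; exact: S0_le.
rewrite S_rec.
apply: (Rle_trans _ (\big[Rplus/0]_(0 <= j < N.+1) (rho j * (beta z * Rt ^ r)))).
  apply: sumR_le => j _; apply: Rmult_le_compat_l => //; exact: IH.
have E : \big[Rplus/0]_(0 <= j < N.+1) (rho j * (beta z * Rt ^ r)) =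
          (\big[Rplus/0]_(0 <= j < N.+1) rho j) * (beta z * Rt ^ r)
  by rewrite big_distrl.
rewrite E.
have h1 := rsum_le N; have h2 := beta_ge0 z; have h3 := pow_le _ r Rt_ge0.
have h4 : 0 <= beta z * Rt ^ r by apply: Rmult_le_pos.
apply: (Rle_trans _ _ _ (Rmult_le_compat_r _ _ _ h4 h1)); right; rewrite /=; ring.
Qed.

Lemma S_eq r z N : (r.+1 * m <= N)%N -> S r z N = beta z * Rt ^ r.
Proof.
elim: r N => [|r IH] N H; first by rewrite /= Rmult_1_r; apply: S0_eq; lia.
rewrite S_rec.
rewrite (eq_big_nat _ _ (F2 := fun j => rho j * (beta z * Rt ^ r))); last first.
  move=> j /andP [_ Hj]; case: (leqP j m) => Hjm.
    by rewrite IH //; move: H Hjm; lia.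
  by rewrite rho_big // !Rmult_0_l.
have E : \big[Rplus/0]_(0 <= j < N.+1) (rho j * (beta z * Rt ^ r)) =
          (\big[Rplus/0]_(0 <= j < N.+1) rho j) * (beta z * Rt ^ r)
  by rewrite big_distrl.
rewrite E rsum_eq; last by move: H; lia.
rewrite /=; ring.
Qed.

Definition Law z t := \big[Rplus/0]_(r < t.+1) L r z t.

Lemma Law_ext z t N : (t <= N)%N -> Law z t = \big[Rplus/0]_(0 <= r < N.+1) L r z t.
Proof.
move=> H; rewrite /Law -(big_mkord xpredT (fun r => L r z t)) (@big_nat_widen _ _ _ 0 t.+1 N.+1) //.
rewrite big_mkcond /=; apply: eq_bigr => r _.
case: ifP => // /negbT; rewrite -leqNgt => Hr; rewrite L_small //.
Qed.

Lemma agg (E : pred Tz) (P : pred nat) N :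
  \big[Rplus/0]_(t < N.+1 | P t) \big[Rplus/0]_(z | E z) Law z t =
  \big[Rplus/0]_(z | E z) \big[Rplus/0]_(0 <= r < N.+1)
      \big[Rplus/0]_(t < N.+1 | P t) L r z t.
Proof.
rewrite (eq_bigr (fun t : 'I_N.+1 => \big[Rplus/0]_(z | E z)
             \big[Rplus/0]_(0 <= r < N.+1) L r z t)); last first.
  move=> t _; apply: eq_bigr => z _; apply: Law_ext; by rewrite -ltnS.
rewrite exchange_big /=; apply: eq_bigr => z _.
by rewrite exchange_big.
Qed.

Lemma agg_lb z (P Q : pred nat) N :
  (forall r, Q r -> (r.+1 * m <= N)%N /\ (forall t, (t <= r.+1 * m)%N -> P t)) ->
  \big[Rplus/0]_(0 <= r < N.+1 | Q r) (beta z * Rt ^ r) <=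
  \big[Rplus/0]_(0 <= r < N.+1) \big[Rplus/0]_(t < N.+1 | P t) L r z t.
Proof.
move=> HQ.
apply: (Rle_trans _ (\big[Rplus/0]_(0 <= i < N.+1 | Q i)
             \big[Rplus/0]_(t < N.+1 | P t) L i z t)); last first.
  apply: sumR_sub => // r _; apply: sumR_ge0 => t _; exact: L_ge0.
apply: sumR_le => r Qr.
have [HK HP] := HQ r Qr.
rewrite -(S_eq z (leqnn _)) /S (@big_nat_widen _ _ _ 0 _ N.+1) // big_mkord.
rewrite big_mkcond [X in _ <= X]big_mkcond /=.
apply: sumR_le => t _.
case: ifP => Ht; first by rewrite HP //; lra.
case: ifP => _; [exact: L_ge0 | lra].
Qed.

Lemma agg_ub z N :
  \big[Rplus/0]_(0 <= r < N.+1) \big[Rplus/0]_(t < N.+1) L r z t <=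
  \big[Rplus/0]_(0 <= r < N.+1) (beta z * Rt ^ r).
Proof.
apply: sumR_le => r _; rewrite -(big_mkord xpredT (fun t => L r z t)); exact: S_le.
Qed.

Definition bE (E : pred Tz) := \big[Rplus/0]_(z | E z) beta z.

Lemma bE_ge0 E : 0 <= bE E.
Proof. exact: sumR_ge0. Qed.

Lemma geom_le_eq c s :
  geom_le c s = \big[Rplus/0]_(r < Z.to_nat (up s) | Rleb (INR r.+1 * c) s) (/2) ^ r.+1.
Proof.
rewrite /geom_le big_mkcond big_ord_recl [in RHS]big_mkcond.
rewrite (_ : (0 < nat_of_ord (@ord0 (Z.to_nat (up s))))%N = false) // andFb Monoid.mul1m.
by apply: eq_bigr => i _; rewrite lift0 ltn0Sn andTb.
Qed.

Lemma sum_Q_bE (E : pred Tz) (Q : pred nat) N :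
  \big[Rplus/0]_(z | E z) \big[Rplus/0]_(0 <= r < N | Q r) (beta z * Rt ^ r) =
  bE E * \big[Rplus/0]_(0 <= r < N | Q r) Rt ^ r.
Proof.
rewrite exchange_big big_distrr /=; apply: eq_bigr => r _.
by rewrite /bE big_distrl.
Qed.

Lemma probT_lb (E : pred Tz) s c : INR m <= c -> 0 <= Rt <= /2 ->
  geom_le c s * (bE E / (1 - Rt)) <=
  \big[Rplus/0]_(t < (Z.to_nat (up s)).+1 | Rleb (INR t) s)
     \big[Rplus/0]_(z | E z) Law z t.
Proof.
move=> Hc HR.
set N := Z.to_nat (up s).
rewrite (agg E (fun t => Rleb (INR t) s) N).
pose Q := fun r : nat => Rleb (INR (r.+1 * m)) s.
have HQ : forall r, Q r -> (r.+1 * m <= N)%N /\ (forall t, (t <= r.+1 * m)%N -> Rleb (INR t) s).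
  move=> r /RlebP Hr; split.
    have [h1 _] := archimed s.
    rewrite INR_IZR_INZ in Hr.
    have : IZR (Z.of_nat (r.+1 * m)) < IZR (up s) by lra.
    move/lt_IZR => H; rewrite /N; apply/leP; lia.
  move=> t Ht; apply/RlebP; apply: Rle_trans Hr; apply: le_INR; exact/leP.
apply: (Rle_trans _ (\big[Rplus/0]_(z | E z)
           \big[Rplus/0]_(0 <= r < N.+1 | Q r) (beta z * Rt ^ r))); last first.
  apply: sumR_le => z _; exact: (agg_lb z HQ).
rewrite sum_Q_bE.
apply: (Rle_trans _ (bE E * \big[Rplus/0]_(0 <= r < N | Q r) Rt ^ r)); last first.
  apply: Rmult_le_compat_l; first exact: bE_ge0.
  rewrite (@big_nat_widen _ _ _ 0 N N.+1) //.
  apply: sumR_sub => [r /andP [] //|r _]; apply: pow_le; lra.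
rewrite big_mkord geom_le_eq -/N.
have E2 : (\big[Rplus/0]_(r < N | Rleb (INR r.+1 * c) s) (/2) ^ r.+1) * (bE E / (1 - Rt)) =
   \big[Rplus/0]_(r < N | Rleb (INR r.+1 * c) s) ((/2) ^ r.+1 * (bE E / (1 - Rt)))
   by rewrite big_distrl.
rewrite E2.
have c0 : 0 <= c by have := pos_INR m; lra.
apply: (@cmpgeom N (fun r => Rleb (INR r.+1 * c) s)) => //; last exact: bE_ge0.
- move=> i j Hij /RlebP Hj; apply/RlebP; apply: Rle_trans Hj.
  apply: Rmult_le_compat_r => //; apply: le_INR; apply/leP; lia.
- move=> r /RlebP Hr; apply/RlebP; apply: Rle_trans Hr.
  rewrite mult_INR; apply: Rmult_le_compat_l => //; exact: pos_INR.
Qed.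

Lemma probE_bounds (E : pred Tz) N : 0 <= Rt < 1 ->
  bE E * ((1 - Rt ^ (N %/ m)) / (1 - Rt)) <=
  \big[Rplus/0]_(t < N.+1) \big[Rplus/0]_(z | E z) Law z t <= bE E / (1 - Rt).
Proof.
move=> HR.
have Hagg : \big[Rplus/0]_(t < N.+1) \big[Rplus/0]_(z | E z) Law z t =
  \big[Rplus/0]_(z | E z) \big[Rplus/0]_(0 <= r < N.+1)
      \big[Rplus/0]_(t < N.+1 | xpredT t) L r z t := agg E xpredT N.
rewrite Hagg; split.
- set K := N %/ m.
  apply: (Rle_trans _ (\big[Rplus/0]_(z | E z)
           \big[Rplus/0]_(0 <= r < N.+1 | (r < K)%N) (beta z * Rt ^ r))); last first.
    apply: sumR_le => z _; apply: (@agg_lb z xpredT (fun r => (r < K)%N)) => r Hr; split => //.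
    by rewrite -leq_divRL.
  rewrite sum_Q_bE -(@big_nat_widen _ _ _ 0 K N.+1 xpredT); last first.
    rewrite /K; apply: leqW; exact: leq_div.
  rewrite big_mkord -geom_div; last lra.
  by apply: Req_le.
- apply: (Rle_trans _ (\big[Rplus/0]_(z | E z)
           \big[Rplus/0]_(0 <= r < N.+1) (beta z * Rt ^ r))).
    apply: sumR_le => z _; exact: agg_ub.
  have -> := sum_Q_bE E xpredT N.+1.
  rewrite big_mkord geom_div; last lra.
  have h0 := bE_ge0 E.
  have h1 : 0 <= Rt ^ N.+1 by apply: pow_le; lra.
  rewrite /Rdiv -Rmult_assoc; apply: Rmult_le_compat_r.
    left; apply: Rinv_0_lt_compat; lra.
  nra.
Qed.

Lemma probE_lim (E : pred Tz) : 0 <= Rt < 1 ->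
  Un_cv (fun N => \big[Rplus/0]_(t < N.+1) \big[Rplus/0]_(z | E z) Law z t)
        (bE E / (1 - Rt)).
Proof.
move=> HR eps Heps.
have h0 := bE_ge0 E.
have D0 : 0 < 1 - Rt by lra.
have Hy : 0 < eps * (1 - Rt) / (bE E + 1).
  apply: Rdiv_lt_0_compat; [nra | lra].
have HRabs : Rabs Rt < 1 by rewrite Rabs_pos_eq; lra.
have [N0 HN0] := pow_lt_1_zero Rt HRabs _ Hy.
exists (N0 * m)%N => n Hn.
have HK : (N0 <= n %/ m)%N by rewrite leq_divRL //; apply/leP.
have := HN0 (n %/ m)%N (leP HK).
rewrite Rabs_pos_eq; last by apply: pow_le; lra.
set q := Rt ^ (n %/ m) => Hq.
have q0 : 0 <= q by apply: pow_le; lra.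
have [lb ub] := probE_bounds E n HR.
set P := \big[Rplus/0]_(t < n.+1) \big[Rplus/0]_(z | E z) Law z t in lb ub *.
rewrite /R_dist Rabs_left1; last lra.
have key : q * (bE E + 1) < eps * (1 - Rt).
  have e1 : eps * (1 - Rt) / (bE E + 1) * (bE E + 1) = eps * (1 - Rt) by field; lra.
  rewrite -e1; apply: Rmult_lt_compat_r => //; lra.
have e2 : bE E / (1 - Rt) - bE E * ((1 - q) / (1 - Rt)) = bE E * q / (1 - Rt)
  by field; lra.
have e3 : bE E * q / (1 - Rt) < eps.
  apply: (Rmult_lt_reg_r (1 - Rt)) => //.
  have -> : bE E * q / (1 - Rt) * (1 - Rt) = bE E * q by field; lra.
  nra.
rewrite -/q in lb; lra.
Qed.

End Gen.

Local Close Scope R_scope.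
Lemma bxorK n (a w : bs n) : bxor (bxor a w) w = a.
Proof. by apply/ffunP=> i; rewrite !ffunE; case: (a i); case: (w i). Qed.

Lemma bxor_inj n (w : bs n) : injective (fun a => bxor a w).
Proof. by move=> a b E; rewrite -(bxorK a w) E bxorK. Qed.

Lemma agree_bxor n (a b w : bs n) : agree (bxor a w) (bxor b w) = agree a b.
Proof. by apply/setP=> i; rewrite !inE !ffunE; case: (a i); case: (b i); case: (w i). Qed.

Lemma differ_bxor n (a b w : bs n) : differ (bxor a w) (bxor b w) = differ a b.
Proof. by apply/setP=> i; rewrite !inE !ffunE; case: (a i); case: (b i); case: (w i). Qed.

Lemma flip_bxor n (a w : bs n) i : flip (bxor a w) i = bxor (flip a i) w.
Proof. by apply/ffunP=> j; rewrite !ffunE; case: (j == i); case: (a j); case: (w j). Qed.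

Lemma flipset_bxor n (a w : bs n) S : flipset (bxor a w) S = bxor (flipset a S) w.
Proof. by apply/ffunP=> j; rewrite !ffunE; case: (j \in S); case: (a j); case: (w j). Qed.

Lemma K1_xor n (w a b z : bs n) : K1 (bxor a w) (bxor b w) (bxor z w) = K1 a b z.
Proof.
rewrite /K1 agree_bxor; apply: eq_bigr => i _.
by rewrite flip_bxor (inj_eq (@bxor_inj n w)).
Qed.

Lemma K2_xor n k (w a b z : bs n) : K2 k (bxor a w) (bxor b w) (bxor z w) = K2 k a b z.
Proof.
have E : ksets k (bxor a w) (bxor b w) = ksets k a b.
  by apply/setP=> S; rewrite !inE differ_bxor.
rewrite /K2 E; apply: eq_bigr => S _.
by rewrite flipset_bxor (inj_eq (@bxor_inj n w)).
Qed.

Section Perm.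
Variables (n : nat) (s : 'I_n -> 'I_n).
Hypothesis bs_s : bijective s.
Let sinj : injective s := bij_inj bs_s.

Lemma bperm_inj : injective (@bperm n s).
Proof.
case: bs_s => g sg gs a b E; apply/ffunP=> i.
have := congr1 (fun f : bs n => f (g i)) E; by rewrite !ffunE gs.
Qed.

Lemma agree_bperm (a b : bs n) : agree (bperm s a) (bperm s b) = s @^-1: agree a b.
Proof. by apply/setP=> i; rewrite !inE !ffunE. Qed.

Lemma differ_bperm (a b : bs n) : differ (bperm s a) (bperm s b) = s @^-1: differ a b.
Proof. by apply/setP=> i; rewrite !inE !ffunE. Qed.

Lemma flip_bperm (a : bs n) i : flip (bperm s a) i = bperm s (flip a (s i)).
Proof. by apply/ffunP=> j; rewrite !ffunE (inj_eq sinj). Qed.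

Lemma flipset_bperm (a : bs n) S : flipset (bperm s a) S = bperm s (flipset a (s @: S)).
Proof. by apply/ffunP=> j; rewrite !ffunE (mem_imset _ _ sinj). Qed.

Lemma K1_perm (a b z : bs n) : K1 (bperm s a) (bperm s b) (bperm s z) = K1 a b z.
Proof.
rewrite /K1 agree_bperm card_preimset //.
rewrite [in RHS](reindex_inj sinj) /=.
apply: eq_big => [i|i _]; first by rewrite !inE.
by rewrite flip_bperm (inj_eq bperm_inj).
Qed.

Lemma imset_inj_set : injective (fun S : {set 'I_n} => s @: S).
Proof. by move=> S T; apply: imset_inj. Qed.

Lemma K2_perm k (a b z : bs n) : K2 k (bperm s a) (bperm s b) (bperm s z) = K2 k a b z.
Proof.
have E : ksets k (bperm s a) (bperm s b) =
         (fun S : {set 'I_n} => s @: S) @^-1: ksets k a b.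
  apply/setP=> S; rewrite !inE differ_bperm (card_imset _ sinj).
  congr (_ && _); apply/idP/idP.
  - move/subsetP=> H; apply/subsetP=> j /imsetP [i iS ->].
    by have := H i iS; rewrite inE.
  - move/subsetP=> H; apply/subsetP=> i iS; rewrite inE.
    by apply: H; apply: imset_f.
rewrite /K2 E card_preimset; last exact: imset_inj_set.
rewrite [in RHS](reindex_inj imset_inj_set) /=.
apply: eq_big => [S|S _]; first by rewrite !inE.
by rewrite flipset_bperm (inj_eq bperm_inj).
Qed.
End Perm.

Lemma partA n k : binary_unbiased (@K1 n) /\ binary_unbiased (@K2 n k).
Proof.
split; split.
- by move=> w a b z; apply: K1_xor.
- by move=> s bs a b z; apply: K1_perm.
- by move=> w a b z; apply: K2_xor.
- by move=> s bs a b z; apply: K2_perm.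
Qed.


Section Bits.
Variable n : nat.
Implicit Types (x y z : bs n) (S : {set 'I_n}).

Definition Ox x : {set 'I_n} := [set i | x i].

Lemma cardU_le (A B : {set 'I_n}) : #|A :|: B| <= #|A| + #|B|.
Proof. by rewrite cardsU leq_subr. Qed.

Lemma ones_flipset_bounds x S :
  ones x <= ones (flipset x S) + #|S| /\ ones (flipset x S) <= ones x + #|S|.
Proof.
split.
- apply: (leq_trans _ (cardU_le [set i | flipset x S i] S)); apply: subset_leq_card.
  apply/subsetP=> j; rewrite !inE ffunE.
  by case: (j \in S); rewrite ?orbT ?orbF.
- apply: (leq_trans _ (cardU_le [set i | x i] S)); apply: subset_leq_card.
  apply/subsetP=> j; rewrite !inE ffunE.
  by case: (j \in S); rewrite ?orbT ?orbF.
Qed.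

Lemma ones_flipset_true x S : (forall j, j \in S -> x j) ->
  ones x = ones (flipset x S) + #|S|.
Proof.
move=> H; rewrite /ones.
have -> : [set i | flipset x S i] = [set i | x i] :\: S.
  apply/setP=> j; rewrite !inE ffunE; case Hj: (j \in S); rewrite ?andbF ?andbT //.
  by rewrite (H j Hj).
rewrite cardsDS ?subnK //; last by apply/subsetP=> j /H; rewrite inE.
by apply: subset_leq_card; apply/subsetP=> j /H; rewrite inE.
Qed.

Lemma ones_flipset_false x S : (forall j, j \in S -> ~~ x j) ->
  ones (flipset x S) = ones x + #|S|.
Proof.
move=> H; rewrite /ones.
have -> : [set i | flipset x S i] = [set i | x i] :|: S.
  apply/setP=> j; rewrite !inE ffunE; case: ifP => Hj; last by rewrite orbF.
  by rewrite orbT (negbTE (H j Hj)).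
rewrite cardsU.
have -> : [set i | x i] :&: S = set0.
  apply/setP=> j; rewrite !inE; case Hj: (j \in S); last by rewrite andbF.
  by rewrite (negbTE (H j Hj)).
by rewrite cards0 subn0.
Qed.

Lemma flip_flipset x i : flip x i = flipset x [set i].
Proof. by apply/ffunP=> j; rewrite !ffunE inE. Qed.

Lemma ones_flip_true x i : x i -> ones x = (ones (flip x i)).+1.
Proof.
move=> H; rewrite flip_flipset (@ones_flipset_true x [set i]) ?cards1 ?addn1 //.
by move=> j; rewrite inE => /eqP ->.
Qed.

Lemma ones_flip_false x i : ~~ x i -> ones (flip x i) = (ones x).+1.
Proof.
move=> H; rewrite flip_flipset (@ones_flipset_false x [set i]) ?cards1 ?addn1 //.
by move=> j; rewrite inE => /eqP ->.
Qed.

Lemma ham_flip_self x i : ham x (flip x i) = 1%N.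
Proof.
rewrite /ham (_ : [set j | x j != flip x i j] = [set i]) ?cards1 //.
apply/setP=> j; rewrite !inE ffunE.
by case: (j == i); case: (x j).
Qed.

Lemma differ_flip x y i : x i == y i -> differ (flip x i) y = i |: differ x y.
Proof.
move=> /eqP H; apply/setP=> j; rewrite !inE ffunE.
case: (eqVneq j i) => [->|_] /=; last by [].
by rewrite H; case: (y i).
Qed.

Lemma ham_flip x y i : x i == y i -> ham (flip x i) y = (ham x y).+1.
Proof.
move=> H; rewrite /ham -/(differ (flip x i) y) -/(differ x y) differ_flip //.
by rewrite cardsU1 inE H.
Qed.

Lemma card_agree x y : #|agree x y| + ham x y = n.
Proof.
have -> : agree x y = ~: differ x y by apply/setP=> j; rewrite !inE negbK.
by rewrite /ham -/(differ x y) addnC cardsC card_ord.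
Qed.

Lemma ones_split x y :
  ones x = #|Ox x :&: differ x y| + #|Ox x :&: agree x y| /\
  ones y = (ham x y - #|Ox x :&: differ x y|) + #|Ox x :&: agree x y|.
Proof.
have AD : agree x y = ~: differ x y by apply/setP=> j; rewrite !inE negbK.
split.
  by rewrite /ones -/(Ox x) AD -(cardsID (differ x y) (Ox x)) setDE.
have E1 : Ox y :&: differ x y = differ x y :\: Ox x.
  apply/setP=> j; rewrite !inE; case: (x j); case: (y j) => //.
have E2 : Ox y :&: agree x y = Ox x :&: agree x y.
  apply/setP=> j; rewrite !inE; case: (x j); case: (y j) => //.
rewrite /ones -/(Ox y) -(cardsID (differ x y) (Ox y)) E1 (setDE (Ox y)) -AD E2.
have := cardsID (Ox x) (differ x y); rewrite setIC /ham -/(differ x y).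
by move=> <-; rewrite addKn.
Qed.
End Bits.

Lemma sgn_cases (u v : Z) : (Z.sgn u * Z.sgn v = -1)%Z ->
  ((0 < u)%Z /\ (v < 0)%Z) \/ ((u < 0)%Z /\ (0 < v)%Z).
Proof.
move=> H.
case: (Z.sgn_spec u) => [[h1 h2]|[[h1 h2]|[h1 h2]]];
case: (Z.sgn_spec v) => [[h3 h4]|[[h3 h4]|[h3 h4]]]; rewrite ?h2 ?h4 in H; lia.
Qed.

Section Opp.
Variables (n k : nat) (x y : bs n).
Hypotheses (n4 : (4 <= n)%N) (nev : ~~ odd n) (k1 : (1 <= k)%N) (kh : (k <= n./2 - 1)%N)
  (op : opposing_pair k x y).

Lemma n_eq : n = n./2 + n./2.
Proof. by rewrite -{1}(odd_double_half n) (negbTE nev) add0n -addnn. Qed.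

Lemma opp_struct : exists b0 : bool,
  [/\ (forall j, j \in differ x y -> x j = b0),
      ones x = (if b0 then n./2 + k else n./2 - k),
      #|[set i in agree x y | x i != b0]| = n./2 - k,
      ham x y = 2 * k &
      #|agree x y| = n - 2 * k].
Proof.
case: op => Hs [Hdx [Hdy Hham]].
have [Ha Hb] := ones_split x y.
have ad : #|Ox x :&: differ x y| <= ham x y.
  by rewrite /ham -/(differ x y); apply: subset_leq_card; apply: subsetIr.
have cA := card_agree x y.
have cID := cardsID (Ox x) (agree x y).
have nE := n_eq.
move: Hs Hdx Hdy; rewrite /sgnhalf /dhalf => Hs Hdx Hdy.
have := sgn_cases Hs.
move: Ha Hb ad cA cID Hdx Hdy Hham nE.
set a := #|Ox x :&: differ x y|.
set b := #|Ox x :&: agree x y|.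
set A := agree x y.
set oX := ones x; set oY := ones y; set hm := ham x y.
set b' := #|A :&: Ox x|; set c' := #|A :\: Ox x|; set nA := #|A|.
move=> Ha Hb ad cA cID Hdx Hdy Hham nE [[h1 h2]|[h1 h2]].
- exists true; split => //.
  + move=> j jD.
    have E : Ox x :&: differ x y = differ x y.
      apply/eqP; rewrite eqEcard subsetIr /=.
      rewrite -/a (_ : #|differ x y| = hm) //; lia.
    by move: jD; rewrite -E !inE => /andP [].
  + lia.
  + rewrite (_ : [set i in A | x i != true] = A :\: Ox x); last first.
      by apply/setP=> j; rewrite !inE; case: (x j); rewrite ?andbF ?andbT.
    have : b' = b by rewrite /b' /b setIC.
    lia.
  + lia.
- exists false; split => //.
  + move=> j jD.
    have E : Ox x :&: differ x y = set0 by apply: cards0_eq; rewrite -/a; lia.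
    apply/negbTE/negP => xj.
    by move: jD; rewrite inE => jD; have := in_set0 j; rewrite -E !inE jD xj.
  + lia.
  + rewrite (_ : [set i in A | x i != false] = A :&: Ox x); last first.
      by apply/setP=> j; rewrite !inE; case: (x j); rewrite ?andbF ?andbT.
    have : b' = b by rewrite /b' /b setIC.
    rewrite -/b'; lia.
  + lia.
Qed.
End Opp.

Local Open Scope R_scope.

Lemma K1_sum n (x y : bs n) (F : bs n -> R) :
  \big[Rplus/0]_(z : bs n) (K1 x y z * F z) =
  \big[Rplus/0]_(i in agree x y) (/ INR #|agree x y| * F (flip x i)).
Proof.
rewrite /K1.
rewrite (eq_bigr (fun z => \big[Rplus/0]_(i in agree x y)
         (/ INR #|agree x y| * indR (z == flip x i) * F z))); last first.
  by move=> z _; rewrite big_distrl.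
rewrite exchange_big /=; apply: eq_bigr => i _.
rewrite -[RHS](sumR_ind (flip x i) (fun z => / INR #|agree x y| * F z)).
apply: eq_bigr => z _ /=.
by case: (z == flip x i); rewrite /indR; ring.
Qed.

Lemma psucc_sum n k (z y : bs n) :
  psucc k z y = \big[Rplus/0]_(S in ksets k z y)
     (/ INR #|ksets k z y| * indR (jump (flipset z S) == n./2)).
Proof.
rewrite /psucc /K2.
rewrite (eq_bigr (fun u => \big[Rplus/0]_(S in ksets k z y)
         (/ INR #|ksets k z y| * indR (u == flipset z S) * indR (jump u == n./2)))); last first.
  by move=> u _; rewrite big_distrl.
rewrite exchange_big /=; apply: eq_bigr => S _.
rewrite -[RHS](sumR_ind (flipset z S) (fun u => / INR #|ksets k z y| * indR (jump u == n./2))).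
apply: eq_bigr => u _ /=.
by case: (u == flipset z S); rewrite /indR; ring.
Qed.

Lemma indR_bounds b : 0 <= indR b <= 1.
Proof. by rewrite /indR; case: b; lra. Qed.

Lemma psucc_bounds n k (z y : bs n) : 0 <= psucc k z y <= 1.
Proof.
rewrite psucc_sum.
have c0 : 0 <= / INR #|ksets k z y|.
  case: (posnP #|ksets k z y|) => [->|H]; first by rewrite /= Rinv_0; lra.
  left; apply: Rinv_0_lt_compat; apply: lt_0_INR; exact/ltP.
split.
  apply: sumR_ge0 => S _; have := indR_bounds (jump (flipset z S) == n./2); nra.
apply: (Rle_trans _ (\big[Rplus/0]_(S in ksets k z y) (/ INR #|ksets k z y|))).
  apply: sumR_le => S _; have := indR_bounds (jump (flipset z S) == n./2); nra.
rewrite sumR_const.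
case: (posnP #|ksets k z y|) => [->|H]; first by rewrite /= Rmult_0_l; lra.
rewrite Rinv_r; first lra.
apply: not_0_INR; move: H; lia.
Qed.

Lemma bin_ineq k : (1 <= k)%N -> ('C((2 * k).+1, k.-1) <= 2 * 'C(2 * k, k.-1))%N.
Proof.
move=> k1.
have E := mul_bin_down (2 * k).+1 k.-1; rewrite /= in E.
move: E; set C0 := 'C(2 * k, k.-1); set C1 := 'C((2 * k).+1, k.-1) => E.
nia.
Qed.

Section Opp2.
Variables (n k : nat) (x y : bs n) (b0 : bool).
Hypotheses (n4 : (4 <= n)%N) (nev : ~~ odd n) (k1 : (1 <= k)%N) (kh : (k <= n./2 - 1)%N)
  (HD : forall j, j \in differ x y -> x j = b0)
  (Hox : ones x = (if b0 then n./2 + k else n./2 - k)%N)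
  (Hham : ham x y = (2 * k)%N).

Lemma jump_eq (u : bs n) : (jump u == n./2) = (ones u == n./2).
Proof.
have nE := n_eq nev.
rewrite /jump; case: (eqVneq (ones u) n) => H; first by rewrite H.
case: (eqVneq (ones u) n./2) => H2; first exact: eqxx.
apply/negbTE; lia.
Qed.

Lemma typeB i : i \in agree x y -> x i != b0 ->
  [/\ dhalf (flip x i) = k.+1, ham x (flip x i) = 1%N,
      ham (flip x i) y = (2 * k).+1 & psucc k (flip x i) y = 0].
Proof.
rewrite inE => xe xb.
have nE := n_eq nev.
have Hz : ones (flip x i) = (if b0 then n./2 + k.+1 else n./2 - k.+1)%N.
  move: xb Hox; case: b0; case Hxi: (x i) => //= _ Ho.
  - by rewrite ones_flip_false ?Hxi // Ho addnS.
  - by have := ones_flip_true Hxi; rewrite Ho; lia.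
split.
- rewrite /dhalf Hz; case: (b0); lia.
- exact: ham_flip_self.
- by rewrite ham_flip // Hham.
- rewrite psucc_sum big1 // => S; rewrite inE => /andP [_ /eqP cS].
  rewrite jump_eq.
  have [l1 l2] := ones_flipset_bounds (flip x i) S.
  have -> : (ones (flipset (flip x i) S) == n./2) = false.
    apply/negbTE; move: l1 l2; rewrite Hz cS; case: (b0); lia.
  by rewrite /indR Rmult_0_r.
Qed.

Lemma typeA i : i \in agree x y -> x i = b0 ->
  dhalf (flip x i) != k.+1 /\ / 2 <= psucc k (flip x i) y.
Proof.
rewrite inE => xe xb.
have nE := n_eq nev.
have Hz : ones (flip x i) = (if b0 then n./2 + k.-1 else n./2 - k.-1)%N.
  move: xb Hox; case: b0 => Hxi Ho.
  - by have := ones_flip_true Hxi; rewrite Ho; lia.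
  - by rewrite ones_flip_false ?Hxi // Ho; lia.
split.
  rewrite /dhalf Hz; apply/eqP; case: (b0); lia.
set z := flip x i.
set D := differ x y.
have iD : i \notin D by rewrite inE negbK.
have Dz : D \subset differ z y by rewrite /z differ_flip // subsetUr.
have zD : forall j, j \in D -> z j = b0.
  move=> j jD; rewrite /z ffunE; case: eqP => [E|_]; last exact: HD.
  by move: iD; rewrite -E jD.
pose good := [set S : {set 'I_n} | S \subset D & #|S| == k.-1].
have hgood : forall S, S \in good -> ones (flipset z S) = n./2.
  move=> S; rewrite inE => /andP [SD /eqP cS].
  have zS : forall j, j \in S -> z j = b0 by move=> j jS; apply: zD; exact: (subsetP SD).
  move: zS Hz; rewrite -/z; case: (b0) => zS Hz'.
  - have := ones_flipset_true (x := z) (S := S) zS; rewrite Hz' cS; lia.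
  - have := ones_flipset_false (x := z) (S := S); rewrite Hz' cS => ->; last first.
      by move=> j /zS ->.
    lia.
have cks : #|ksets k z y| = 'C((2 * k).+1, k.-1).
  rewrite /ksets cards_draws; congr 'C(_, _).
  by rewrite -[#|differ z y|]/(ham z y) /z ham_flip // Hham.
have cgood : #|good| = 'C(2 * k, k.-1).
  by rewrite /good cards_draws -[#|D|]/(ham x y) Hham.
have C1pos : (0 < 'C((2 * k).+1, k.-1))%N by rewrite bin_gt0; lia.
have cpos : 0 < INR 'C((2 * k).+1, k.-1) by apply: lt_0_INR; apply/ltP.
rewrite psucc_sum.
apply: (Rle_trans _ (\big[Rplus/0]_(S in good) (/ INR #|ksets k z y|))); last first.
  rewrite big_mkcond [X in _ <= X]big_mkcond /=; apply: sumR_le => S _.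
  case: ifP => Sg.
    have Sks : S \in ksets k z y.
      move: Sg; rewrite !inE => /andP [SD ->]; rewrite andbT.
      exact: subset_trans SD Dz.
    by rewrite Sks jump_eq hgood // eqxx /indR Rmult_1_r; lra.
  case: ifP => _; last lra.
  have := indR_bounds (jump (flipset z S) == n./2); rewrite cks.
  have : 0 <= / INR 'C((2 * k).+1, k.-1) by left; apply: Rinv_0_lt_compat.
  nra.
rewrite sumR_const cgood cks.
have := bin_ineq k1 => /leP /le_INR; rewrite mult_INR /= => Hb.
apply: (Rmult_le_reg_r (INR 'C((2 * k).+1, k.-1))) => //.
rewrite Rmult_assoc Rinv_l; last lra.
lra.
Qed.

End Opp2.

Local Close Scope R_scope.

Local Open Scope R_scope.

Lemma ntests_facts n : (4 <= n)%N ->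
  1 <= 2 * log2 (INR n) /\ 2 * log2 (INR n) < INR (ntests n) /\
  INR (ntests n) <= 1 + 2 * log2 (INR n) /\
  (/ 2) ^ ntests n <= 2 * log2 (INR n) / (INR n) ^ 2.
Proof.
move=> n4.
have n4R : 4 <= INR n by have := le_INR 4 n (leP n4); rewrite /=; lra.
have l2 : 0 < ln 2 by have := ln_lt_2; lra.
have l4 : ln 4 = 2 * ln 2.
  by rewrite (_ : 4 = 2 * 2) ?ln_mult; lra.
have lnn : ln 4 <= ln (INR n).
  case: (Req_dec (INR n) 4) => [->|H]; first lra.
  left; apply: ln_increasing; lra.
have r1 : 4 <= 2 * log2 (INR n).
  rewrite /log2; apply: (Rmult_le_reg_r (ln 2)) => //.
  have -> : 2 * (ln (INR n) / ln 2) * ln 2 = 2 * ln (INR n) by field; lra.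
  lra.
set r := 2 * log2 (INR n) in r1 *.
have [i1 i2] := base_Int_part r.
set z := Int_part r in i1 i2.
have z0 : (0 <= z)%Z by apply: le_IZR; lra.
have Em : INR (ntests n) = IZR z + 1.
  rewrite /ntests -/r -/z S_INR INR_IZR_INZ Z2Nat.id //.
split; first lra.
split; first lra.
split; first lra.
set m := ntests n in Em *.
have pm : INR n ^ 2 < 2 ^ m.
  rewrite -(@Rpower_pow m 2); last lra.
  rewrite /Rpower.
  have -> : INR n ^ 2 = exp (ln (INR n) + ln (INR n)).
    by rewrite exp_plus exp_ln /=; lra.
  apply: exp_increasing.
  have -> : ln (INR n) + ln (INR n) = r * ln 2 by rewrite /r /log2; field; lra.
  apply: Rmult_lt_compat_r => //; lra.
rewrite pow_inv.
have n2 : 0 < INR n ^ 2 by apply: pow_lt; lra.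
apply: (Rle_trans _ (/ INR n ^ 2)).
  left; apply: Rinv_lt_contravar => //; apply: Rmult_lt_0_compat => //; lra.
rewrite /Rdiv -{1}(Rmult_1_l (/ INR n ^ 2)); apply: Rmult_le_compat_r; last lra.
left; exact: Rinv_0_lt_compat.
Qed.

Lemma inv_INR_ge0 (p : nat) : 0 <= / INR p.
Proof.
case: p => [|p]; first by rewrite /= Rinv_0; lra.
left; apply: Rinv_0_lt_compat; apply: lt_0_INR; lia.
Qed.

Lemma K1_ge0 n (x y z : bs n) : 0 <= K1 x y z.
Proof.
apply: sumR_ge0 => i _; have := inv_INR_ge0 #|agree x y|.
have := indR_bounds (z == flip x i); nra.
Qed.

Lemma geo_if (a : R) m T : (T <= m)%N ->
  \big[Rplus/0]_(0 <= j < T.+1) (if (1 <= j <= m)%N then a ^ (j - 1) * (1 - a) else 0)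
  = 1 - a ^ T.
Proof.
elim: T => [|T IH] H; first by rewrite sum1 /=; lra.
rewrite big_nat_recr //= IH; last lia.
have -> : (T < m)%N by [].
rewrite subSS subn0; ring.
Qed.

Section Main.
Variables (n k : nat) (x y : bs n) (b0 : bool).
Hypotheses (n4 : (4 <= n)%N) (nev : ~~ odd n) (k1 : (1 <= k)%N) (kh : (k <= n./2 - 1)%N)
  (HD : forall j, j \in differ x y -> x j = b0)
  (Hox : ones x = (if b0 then n./2 + k else n./2 - k)%N)
  (Hcnt : #|[set i in agree x y | x i != b0]| = (n./2 - k)%N)
  (Hham : ham x y = (2 * k)%N)
  (HA : #|agree x y| = (n - 2 * k)%N).

Let m := ntests n.
Let rho := fun j => iter_restart k x y j.
Let beta := fun z => K1 x y z * (1 - psucc k z y) ^ m.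
Let c := / INR #|agree x y|.

Lemma m_gt0 : (0 < m)%N. Proof. by []. Qed.

Lemma rho_ge0 j : 0 <= rho j.
Proof.
rewrite /rho /iter_restart; case: ifP => _; last lra.
apply: sumR_ge0 => z _.
have := K1_ge0 x y z; have [p0 p1] := psucc_bounds k z y.
have : 0 <= (1 - psucc k z y) ^ (j - 1) by apply: pow_le; lra.
move=> h1 h2.
apply: Rmult_le_pos => //; apply: Rmult_le_pos => //.
Qed.

Lemma rho0 : rho 0%N = 0. Proof. by []. Qed.

Lemma rho_big j : (m < j)%N -> rho j = 0.
Proof.
move=> H; rewrite /rho /iter_restart.
by have -> : (1 <= j <= ntests n)%N = false by rewrite /m in H; lia.
Qed.

Lemma beta_ge0 z : 0 <= beta z.
Proof.
rewrite /beta; apply: Rmult_le_pos; first exact: K1_ge0.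
have [p0 p1] := psucc_bounds k z y; apply: pow_le; lra.
Qed.

Lemma law_iter_L r z t : law_iter k x y r z t = L rho beta m r z t.
Proof.
elim: r t => [|r IH] t //=.
by apply: eq_bigr => j _; rewrite IH.
Qed.

Lemma law_Law z t : law k x y z t = Law rho beta m z t.
Proof. by apply: eq_bigr => r _; rewrite law_iter_L. Qed.

Lemma cA_pos : (0 < #|agree x y|)%N.
Proof. have nE := n_eq nev; rewrite HA; lia. Qed.

Lemma sumA : \big[Rplus/0]_(i in agree x y) c = 1.
Proof.
rewrite sumR_const /c Rinv_r //; apply: not_0_INR; have := cA_pos; lia.
Qed.

Lemma sumB : \big[Rplus/0]_(i in agree x y) (if x i != b0 then c else 0) = / 2.
Proof.
rewrite -big_mkcondr /=.
rewrite (eq_bigl (fun i => i \in [set i in agree x y | x i != b0])); last first.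
  by move=> i; rewrite !inE.
rewrite sumR_const Hcnt /c HA.
have nE := n_eq nev.
have -> : (n - 2 * k = 2 * (n./2 - k))%N by lia.
rewrite mult_INR /=.
have : 0 < INR (n./2 - k) by apply: lt_0_INR; apply/ltP; lia.
move=> H; field; lra.
Qed.

Lemma if_sum (b : bool) (F : bs n -> R) :
  (if b then \big[Rplus/0]_(z : bs n) F z else 0) =
  \big[Rplus/0]_(z : bs n) (if b then F z else 0).
Proof. by case: b => //; rewrite big1. Qed.

Lemma Rt_eq : Rt rho m =
  \big[Rplus/0]_(z : bs n) (K1 x y z * (1 - (1 - psucc k z y) ^ m)).
Proof.
rewrite /Rt.
rewrite (eq_big_nat _ _ (F2 := fun j => \big[Rplus/0]_(z : bs n)
   (if (1 <= j <= m)%N then K1 x y z * (1 - psucc k z y) ^ (j - 1) * psucc k z y else 0)));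
  last by move=> j _; rewrite /rho /iter_restart if_sum.
rewrite exchange_big /=; apply: eq_bigr => z _.
rewrite -(geo_if (1 - psucc k z y) (leqnn m)) big_distrr /=.
apply: eq_big_nat => j _; case: ifP => _; ring.
Qed.

Lemma sum_beta_E (E : pred (bs n)) : bE beta E =
  \big[Rplus/0]_(i in agree x y) (c * ((1 - psucc k (flip x i) y) ^ m * indR (E (flip x i)))).
Proof.
rewrite /bE big_mkcond /=.
rewrite (eq_bigr (fun z => K1 x y z * ((1 - psucc k z y) ^ m * indR (E z)))); last first.
  by move=> z _; rewrite /beta /indR; case: (E z); ring.
exact: K1_sum.
Qed.

Lemma K1_total : \big[Rplus/0]_(z : bs n) (K1 x y z * 1) = 1.
Proof.
rewrite K1_sum -[RHS]sumA; apply: eq_bigr => i _; rewrite /c; ring.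
Qed.

Lemma Rt_bE : Rt rho m + bE beta predT = 1.
Proof.
have E : bE beta predT = \big[Rplus/0]_(z : bs n) beta z by apply: eq_bigl.
rewrite E Rt_eq -big_split -[RHS]K1_total.
apply: eq_bigr => z _; rewrite /beta.
transitivity (K1 x y z * (1 - (1 - psucc k z y) ^ m) + K1 x y z * (1 - psucc k z y) ^ m);
  first by [].
ring.
Qed.

Let q := (/ 2) ^ m.

Lemma bE_E (E : pred (bs n)) :
  (forall i, i \in agree x y -> x i != b0 -> E (flip x i)) ->
  (forall i, i \in agree x y -> x i = b0 -> ~~ E (flip x i)) ->
  bE beta E = / 2.
Proof.
move=> H1 H2; rewrite sum_beta_E -sumB; apply: eq_bigr => i iA.
case: ifP => TB.
  have [_ _ _ ->] := typeB n4 nev k1 kh HD Hox Hham iA TB.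
  by rewrite H1 // /indR Rminus_0_r pow1; ring.
move/negbFE/eqP: TB => TB.
by rewrite (negbTE (H2 i iA TB)) /indR; ring.
Qed.

Lemma bE1 : bE beta (fun z => dhalf z == k.+1) = / 2.
Proof.
apply: bE_E => i iA TB.
  by have [-> _ _ _] := typeB n4 nev k1 kh HD Hox Hham iA TB.
by have [H _] := typeA n4 nev k1 kh HD Hox Hham iA TB.
Qed.

Lemma bE2 : bE beta (fun z => [&& dhalf z == k.+1, ham x z == 1%N & ham z y == (2 * k).+1]) = / 2.
Proof.
apply: bE_E => i iA TB.
  by have [-> -> -> _] := typeB n4 nev k1 kh HD Hox Hham iA TB; rewrite !eqxx.
by have [H _] := typeA n4 nev k1 kh HD Hox Hham iA TB; rewrite (negbTE H).
Qed.

Lemma c_ge0 : 0 <= c. Proof. exact: inv_INR_ge0. Qed.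

Lemma bE_lb : / 2 <= bE beta predT.
Proof.
rewrite sum_beta_E -sumB; apply: sumR_le => i iA.
have c0 := c_ge0.
case: ifP => TB.
  have [_ _ _ ->] := typeB n4 nev k1 kh HD Hox Hham iA TB.
  rewrite Rminus_0_r pow1 /indR /=; lra.
have [p0 p1] := psucc_bounds k (flip x i) y.
have : 0 <= (1 - psucc k (flip x i) y) ^ m by apply: pow_le; lra.
rewrite /indR /=; nra.
Qed.

Lemma bE_ub : bE beta predT <= q + (1 - q) * / 2.
Proof.
have q0 : 0 <= q by apply: pow_le; lra.
have q1 : q <= 1 by rewrite /q -(pow1 m); apply: pow_incr; lra.
apply: (Rle_trans _ (\big[Rplus/0]_(i in agree x y)
         (q * c + (1 - q) * (if x i != b0 then c else 0)))).
  rewrite sum_beta_E; apply: sumR_le => i iA.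
  have c0 := c_ge0.
  case: ifP => TB.
    have [_ _ _ ->] := typeB n4 nev k1 kh HD Hox Hham iA TB.
    rewrite Rminus_0_r pow1 /indR /=; lra.
  move/negbFE/eqP: TB => TB.
  have [_ ph] := typeA n4 nev k1 kh HD Hox Hham iA TB.
  have [p0 p1] := psucc_bounds k (flip x i) y.
  have : (1 - psucc k (flip x i) y) ^ m <= q by apply: pow_incr; lra.
  rewrite /indR /= => HP; nra.
rewrite big_split /= -!big_distrr /= sumA sumB; lra.
Qed.

Lemma q_bounds : 0 <= q <= 1.
Proof.
split; first by apply: pow_le; lra.
by rewrite /q -(pow1 m); apply: pow_incr; lra.
Qed.

Lemma Rt_bounds : 0 <= Rt rho m <= / 2.
Proof.
have := Rt_bE; have := bE_lb; have := bE_ub; have := q_bounds.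
move=> [q0 q1] h1 h2 h3.
split; last lra.
have : q + (1 - q) * / 2 <= 1 by nra.
lra.
Qed.

Lemma probT_eq (E : pred (bs n)) s :
  probT_le k x y E s =
  \big[Rplus/0]_(t < (Z.to_nat (up s)).+1 | Rleb (INR t) s)
     \big[Rplus/0]_(z | E z) Law rho beta m z t.
Proof. by apply: eq_bigr => t _; apply: eq_bigr => z _; rewrite law_Law. Qed.

Lemma probE_eq (E : pred (bs n)) N :
  probE_partial k x y E N =
  \big[Rplus/0]_(t < N.+1) \big[Rplus/0]_(z | E z) Law rho beta m z t.
Proof. by apply: eq_bigr => t _; apply: eq_bigr => z _; rewrite law_Law. Qed.

Lemma lim_E (E : pred (bs n)) :
  Un_cv (probE_partial k x y E) (bE beta E / (1 - Rt rho m)).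
Proof.
move=> eps He.
have Hr : 0 <= Rt rho m < 1 by have := Rt_bounds; lra.
have [N0 HN] := probE_lim m_gt0 rho_ge0 rho0 rho_big beta_ge0 E Hr He.
exists N0 => nn Hn; rewrite probE_eq; exact: HN.
Qed.

Lemma cm : INR m <= 1 + 2 * log2 (INR n).
Proof. by have [_ [_ [H _]]] := ntests_facts n4. Qed.

Lemma main_i s : geom_le (1 + 2 * log2 (INR n)) s <= probT_le k x y predT s.
Proof.
have := probT_lb m_gt0 rho_ge0 rho0 rho_big beta_ge0 predT s cm Rt_bounds.
rewrite probT_eq.
have E : bE beta predT / (1 - Rt rho m) = 1.
  have := Rt_bE; have := bE_lb => h1 h2.
  have -> : 1 - Rt rho m = bE beta predT by lra.
  field; lra.
by rewrite E Rmult_1_r.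
Qed.

Lemma main_ic : exists pE : R,
  Un_cv (probE_partial k x y (fun z => dhalf z == k.+1)) pE /\
  forall s : R,
    geom_le (1 + 2 * log2 (INR n)) s * pE
      <= probT_le k x y (fun z => dhalf z == k.+1) s.
Proof.
exists (bE beta (fun z => dhalf z == k.+1) / (1 - Rt rho m)); split; first exact: lim_E.
move=> s; rewrite probT_eq.
exact: (probT_lb m_gt0 rho_ge0 rho0 rho_big beta_ge0 _ s cm Rt_bounds).
Qed.

Lemma main_ii : exists p : R,
  Un_cv (probE_partial k x y
          (fun z => [&& dhalf z == k.+1, ham x z == 1%N & ham z y == (2 * k).+1])) p /\
  1 - 2 * log2 (INR n) / (INR n) ^ 2 <= p.
Proof.
eexists; split; first exact: lim_E.
rewrite bE2.
have := Rt_bE; have := bE_lb; have := bE_ub; have := q_bounds.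
move=> [q0 q1] h1 h2 h3.
have -> : 1 - Rt rho m = bE beta predT by lra.
have [_ [_ [_ Hq]]] := ntests_facts n4.
rewrite -/m -/q in Hq.
apply: (Rle_trans _ (1 - q)); first lra.
set B := bE beta predT in h1 h2 h3 *.
apply: (Rmult_le_reg_r B); first lra.
rewrite /Rdiv Rmult_assoc Rinv_l; last lra.
nra.
Qed.

End Main.

Local Close Scope R_scope.

Theorem lemma13 (n k : nat) (x y : bs n) :
  (4 <= n)%N -> ~~ odd n -> (1 <= k <= n./2 - 1)%N ->
  (binary_unbiased (@K1 n) /\ binary_unbiased (@K2 n k)) /\
  (opposing_pair k x y ->
     (forall s : R,
        (geom_le (1 + 2 * log2 (INR n)) s <= probT_le k x y predT s)%Re) /\
     (exists pE : R,
        Un_cv (probE_partial k x y (fun z => dhalf z == k.+1)) pE /\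
        forall s : R,
          (geom_le (1 + 2 * log2 (INR n)) s * pE
             <= probT_le k x y (fun z => dhalf z == k.+1) s)%Re) /\
     (exists p : R,
        Un_cv (probE_partial k x y
                 (fun z => [&& dhalf z == k.+1, ham x z == 1 & ham z y == (2 * k).+1])) p /\
        (1 - 2 * log2 (INR n) / (INR n) ^ 2 <= p)%Re)).
Proof.
move=> n4 nev /andP [k1 kh].
split; first exact: partA.
move=> op.
have [b0 [HD Hox Hcnt Hham HA]] := opp_struct n4 nev k1 kh op.
split; first exact: (main_i n4 nev k1 kh HD Hox Hcnt Hham HA).
split; first exact: (main_ic n4 nev k1 kh HD Hox Hcnt Hham HA).
exact: (main_ii n4 nev k1 kh HD Hox Hcnt Hham HA).
Qed.
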